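(* Let $t$ be a positive integer and let $\mathcal{B}$ be a bramble of order at least $2t+1$ in a graph $G$. Then there exist (1) two vertex-disjoint paths $P_1$ and $P_2$ in $G$ such that both $\mathcal{B}_{V(P_1)}$ and $\mathcal{B}_{V(P_2)}$ have order exactly $t$, and (2) pairwise vertex-disjoint paths $Q_1,\dots,Q_t$ in $G$, each of which has one endpoint on $P_1$ and one endpoint on $P_2$ and is internally disjoint from $P_1\cup P_2$.
   Context: All graphs are finite and simple. A bramble $\mathcal{B}$ in a graph $G$ is a family of connected subgraphs of $G$ such that every two of them share a vertex or are joined by an edge of $G$. A hitting set for $\mathcal{B}$ is a set of vertices intersecting every element of $\mathcal{B}$; the order of $\mathcal{B}$ is the minimum size of a hitting set. Any subset of a bramble is a bramble. For $X\subseteq V(G)$, $\mathcal{B}_X$ denotes the set of elements of $\mathcal{B}$ that intersect $X$. *)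

(* Defs.v *)
From mathcomp Require Import all_boot.
Set Implicit Arguments. Unset Strict Implicit. Unset Printing Implicit Defensive.

Definition simple_graph (T : finType) (e : rel T) : Prop :=
  symmetric e /\ irreflexive e.

Section Bramble.
Variables (T : finType) (e : rel T).

Definition connected_set (S : {set T}) : Prop :=
  S != set0 /\
  forall x y, x \in S -> y \in S ->
    connect (fun u v => [&& e u v, u \in S & v \in S]) x y.

Definition touch (A B : {set T}) : Prop :=
  (A :&: B != set0) \/ (exists x y, [/\ x \in A, y \in B & e x y]).

Definition bramble (B : {set {set T}}) : Prop :=
  (forall H, H \in B -> connected_set H) /\
  (forall H1 H2, H1 \in B -> H2 \in B -> touch H1 H2).

Definition hitting (B : {set {set T}}) (X : {set T}) : bool :=
  [forall H in B, H :&: X != set0].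

(* order = minimum size of a hitting set (#|T| is only a default bound,
   attained by [set: T] for a bramble) *)
Definition border (B : {set {set T}}) : nat :=
  \big[minn/#|T|]_(X : {set T} | hitting B X) #|X|.

Definition bsub (B : {set {set T}}) (X : {set T}) : {set {set T}} :=
  [set H in B | H :&: X != set0].

Definition gpath (p : seq T) : Prop :=
  match p with
  | [::] => False
  | x :: r => path e x r && uniq p
  end.

Definition vset (p : seq T) : {set T} := [set x in p].

End Bramble.

(* Main.v *)
Require Import Defs.
From mathcomp Require Import all_boot.
From Stdlib Require Import Classical ClassicalEpsilon.
Set Implicit Arguments. Unset Strict Implicit. Unset Printing Implicit Defensive.

Section Generic.
Variable T : finType.
Implicit Types (r : rel T) (Z Y W : {set T}).

Lemma connect_mono r r' x y : subrel r r' -> connect r x y -> connect r' x y.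
Proof. move=> H; apply: connect_sub => a b /H; exact: connect1. Qed.

Lemma connect_inv r W a v : (forall x y, r x y -> x \in W -> y \in W) ->
  a \in W -> connect r a v -> v \in W.
Proof.
move=> H aW /connectP[p pp ->]; elim: p a pp aW => //= c p IH a /andP[rac pp] aW.
by apply: IH => //; exact: H rac aW.
Qed.

Lemma connect_start r a z : connect r a z -> a = z \/ exists c, r a c.
Proof.
move/connectP=> [[|c p] /= pp ->]; first by left.
by right; exists c; case/andP: pp.
Qed.

Lemma connect_last r a v : connect r a v -> v = a \/ exists x, r x v.
Proof.
move/connectP=> [p]; case/lastP: p => [|q y] /=; first by move=> _ ->; left.
rewrite rcons_path last_rcons => /andP[_ H] ->; right; by exists (last a q).
Qed.

Lemma connect_split r Z a b : connect r a b ->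
  (exists2 z, z \in Z & connect [rel v w | r v w && (v \notin Z)] a z) \/
  ((a \notin Z) /\ connect [rel v w | [&& r v w, v \notin Z & w \notin Z]] a b).
Proof.
move/connectP=> [p pp ->]; elim: p a pp => [|c p IH] a /=.
  by move=> _; case: (boolP (a \in Z)) => aZ; [left; exists a | right; split].
case/andP=> rac pp; case: (boolP (a \in Z)) => aZ; first by left; exists a.
case: (IH c pp) => [[z zZ cz]|[cZ cb]].
  left; exists z => //; apply: connect_trans cz; apply: connect1 => /=.
  by rewrite rac aZ.
right; split => //; apply: connect_trans cb; apply: connect1 => /=.
by rewrite rac aZ cZ.
Qed.

Lemma connect_src r Y a z : connect [rel v w | r v w && (v \notin Y)] a z ->
  connect [rel v w | [&& r v w, v \notin Y & ((w \notin Y) || (w == z))]] a z.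
Proof.
move/connectP=> [p pp ->]; elim: p a pp => [|c p IH] a /=; first by [].
case/andP=> /andP[rac aY] pp; apply: connect_trans (IH c pp).
apply: connect1 => /=; rewrite rac aY /=.
case: p pp {IH} => [|d p] /=; first by rewrite eqxx orbT.
by case/andP=> /andP[_ ->].
Qed.

Lemma connect_src_avoid r Y a z : connect [rel v w | r v w && (v \notin Y)] a z ->
  z \notin Y ->
  (a \notin Y) /\ connect [rel v w | [&& r v w, v \notin Y & w \notin Y]] a z.
Proof.
move=> H zY; split.
  by case: (connect_start H) => [->//|[c /andP[]]].
apply: connect_mono (connect_src H) => v w /= /and3P[-> -> /orP[]] //= /eqP ->.
exact: zY.
Qed.

Lemma connect_reach r a z : connect r a z ->
  connect [rel v w | [&& r v w, connect r a v & connect r a w]] a z.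
Proof.
move/connectP=> [p]; elim/last_ind: p z => [|q y IH] z /=; first by move=> _ ->.
rewrite rcons_path last_rcons => /andP[pq ry] ->.
apply: connect_trans (IH _ pq erefl) _; apply: connect1 => /=.
rewrite ry /=; apply/andP; split.
  by apply/connectP; exists q.
by apply/connectP; exists (rcons q y); rewrite ?rcons_path ?pq ?ry ?last_rcons.
Qed.

Lemma connect_cross r (R : {set T}) a b : connect r a b -> a \in R -> b \notin R ->
  exists u w, [/\ u \in R, w \notin R & r u w].
Proof.
move/connectP=> [p pp ->]; elim: p a pp => [|c p IH] a /=; first by move=> _ ->.
case/andP=> rac pp aR lR; case: (boolP (c \in R)) => cR; first by apply: (IH c pp cR lR).
by exists a, c.
Qed.


Lemma disjointP (A B : {set T}) :
  reflect (forall x, x \in A -> x \in B -> False) [disjoint A & B].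
Proof.
rewrite disjoints_subset; apply: (iffP subsetP) => H x xA.
  by move=> xB; have := H x xA; rewrite inE xB.
by rewrite inE; apply/negP; exact: H.
Qed.

End Generic.

Section Menger.
Variable T : finType.
Implicit Types (e : rel T) (A B S X Y Z W : {set T}).

Definition avoid e X : rel T := fun a b => [&& e a b, a \notin X & b \notin X].
Definition sep e A B X := forall a b, a \in A -> b \in B -> a \notin X ->
  ~~ connect (avoid e X) a b.
Definition induced e W : rel T := fun a b => [&& e a b, a \in W & b \in W].
Definition linked e A B W := exists a b,
  [/\ a \in A, b \in B, a \in W, b \in W & connect (induced e W) a b].
Definition linkage e A B k (W : 'I_k -> {set T}) :=
  (forall i, linked e A B (W i)) /\ (forall i j, i != j -> [disjoint W i & W j]).

Lemma avoid_sym e X : symmetric e -> symmetric (avoid e X).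
Proof. by move=> se a b; rewrite /avoid se; case: (e b a); case: (a \in X); case: (b \in X). Qed.

Lemma induced_sym e X : symmetric e -> symmetric (induced e X).
Proof. by move=> se a b; rewrite /induced se; case: (e b a); case: (a \in X); case: (b \in X). Qed.

Lemma avoid_end e X a b : connect (avoid e X) a b -> a \notin X -> b \notin X.
Proof.
move=> c aX; have := @connect_inv _ (avoid e X) (~: X) a b; rewrite !inE; apply => //.
by move=> v w /and3P[_ _]; rewrite !inE.
Qed.

Lemma sep_sym e A B X : symmetric e -> sep e A B X -> sep e B A X.
Proof.
move=> se H b a bB aA bX; apply/negP => c.
have aX := avoid_end c bX.
move: c; rewrite (sym_connect_sym (avoid_sym X se)) => c.
by move: (H a b aA bB aX); rewrite c.
Qed.

Lemma claimA e e' A B S u u' :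
  subrel e' e ->
  (forall v w, e v w -> ~~ e' v w -> (v == u) || (v == u')) ->
  sep e' A B S -> u' \notin S ->
  (exists2 b0, b0 \in B & (b0 \notin S) && connect (avoid e' S) u' b0) ->
  forall X, sep e' A (u |: S) X -> sep e A B X.
Proof.
move=> sub bad sepS u'S [b0 b0B /andP[b0S cu'b0]] X sepX a b aA bB aX.
apply/negP => cab.
pose Z := u |: (u' |: S).
have ee : forall v w, e v w -> v \notin Z -> e' v w.
  move=> v w evw; apply: contraR => ne; have := bad v w evw ne.
  by rewrite !inE => /orP[]->; rewrite ?orbT.
case: (connect_split Z cab) => [[z zZ caz] | [aZ cab']].
- have c1 : connect (avoid e' X) a z.
    apply: connect_mono caz => v w /= /andP[/and3P[evw vX wX] vZ].
    by rewrite /avoid vX wX (ee v w evw vZ).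
  case: (boolP (z \in u |: S)) => zuS.
    by have := sepX a z aA zuS aX; rewrite c1.
  have zu' : z = u'.
    by move: zZ zuS; rewrite !inE; case/or3P=> [->|/eqP->|->] //; rewrite orbT.
  have c2 : connect [rel v w | e' v w && (v \notin S)] a z.
    apply: connect_mono caz => v w /= /andP[/and3P[evw vX wX] vZ].
    rewrite (ee v w evw vZ) /=; move: vZ; rewrite !inE.
    by apply: contra => ->; rewrite !orbT.
  have zS : z \notin S by rewrite zu'.
  have [aS c3] := connect_src_avoid c2 zS.
  have c4 : connect (avoid e' S) a b0.
    by apply: connect_trans cu'b0; rewrite -zu'.
  by have := sepS a b0 aA b0B aS; rewrite c4.
- have aS : a \notin S by move: aZ; rewrite !inE; apply: contra => ->; rewrite !orbT.
  have c1 : connect (avoid e' S) a b.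
    apply: connect_mono cab' => v w /= /and3P[/and3P[evw _ _] vZ wZ].
    rewrite /avoid (ee v w evw vZ) /=.
    move: vZ wZ; rewrite !inE => /norP[_ /norP[_ ->]] /norP[_ /norP[_ ->]].
    done.
  by have := sepS a b aA bB aS; rewrite c1.
Qed.


Lemma fchoice (I X0 : Type) (P : I -> X0 -> Prop) :
  (forall i, exists x, P i x) -> exists f, forall i, P i (f i).
Proof.
move=> H; exists (fun i => proj1_sig (constructive_indefinite_description _ (H i))).
move=> i; exact: proj2_sig.
Qed.

Definition trimP e' A X (t : (T * T) * {set T}) :=
  let: (a, z, W') := t in
  [/\ (a \in A /\ z \in X), (a \in W' /\ z \in W'),
   (forall v, v \in W' -> v \in X -> v = z),
   connect (induced e' W') a z &
   (forall v Y, v \in W' -> Y \subset X -> v \notin Y ->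
      (a \notin Y) /\ connect (avoid e' Y) a v)].

Lemma trim1 e' A X W : linked e' A X W ->
  exists t, trimP e' A X t /\ t.2 \subset W.
Proof.
case=> a [b [aA bX aW bW cab]].
case: (connect_split X cab) => [[z zX caz] | [aX cab']]; last first.
  exfalso; case: (connect_last cab') => [ba | [x0 /and3P[_ _ bX']]].
    by move: aX; rewrite -ba bX.
  by rewrite bX in bX'.
pose R0 := [rel v w | [&& induced e' W v w, v \notin X & ((w \notin X) || (w == z))]].
have cz : connect R0 a z := connect_src caz.
exists (a, z, [set v | connect R0 a v]); split; last first.
  apply/subsetP => v; rewrite inE => cv.
  apply: (connect_inv _ aW cv) => x0 y0 /= /and3P[/and3P[_ _ ->]] //.
split => //.
- by rewrite !inE connect0 cz.
- move=> v; rewrite inE => cv vX.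
  case: (connect_last cv) => [va | [x0 /= /and3P[_ _ /orP[]]]].
  + case: (connect_start cz) => [az|[c /= /and3P[_ aX' _]]]; first by rewrite va az.
    by rewrite -va vX in aX'.
  + by rewrite vX.
  + by move/eqP.
- apply: connect_mono (connect_reach cz) => v w /= /and3P[/and3P[/and3P[evw _ _] _ _] cv cw].
  by rewrite /induced evw !inE cv cw.
- move=> v Y; rewrite inE => cv YX vY.
  have c2 : connect [rel v w | e' v w && (v \notin Y)] a v.
    apply: connect_mono cv => x0 y0 /= /and3P[/and3P[exy _ _] x0X _].
    rewrite exy /=; apply: contra x0X; exact: (subsetP YX).
  exact: connect_src_avoid c2 vY.
Qed.

Lemma menger0 e A B k : (forall a b, ~~ e a b) ->
  (forall X, sep e A B X -> k <= #|X|) -> exists L : 'I_k -> {set T}, linkage e A B L.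
Proof.
move=> ne H.
have sAB : sep e A B (A :&: B).
  move=> a b aA bB aAB; apply/negP => c; case: (connect_start c) => [ab | [c' ec]].
  - by move: aAB; rewrite inE aA ab bB.
  - by move: ec; rewrite /avoid (negbTE (ne _ _)).
have kle := H _ sAB.
case: k kle H => [|k] kle _.
  by exists (fun _ => set0); split => [[]|[]].
have : 0 < #|A :&: B| by apply: leq_trans kle.
case/card_gt0P => a0 _.
pose s := enum (A :&: B).
have iS : forall i : 'I_k.+1, i < size s.
  by move=> i; rewrite -cardE; apply: leq_trans kle.
exists (fun i => [set nth a0 s i]); split.
- move=> i.
  have m : nth a0 s i \in A :&: B by rewrite -mem_enum mem_nth.
  rewrite inE in m; case/andP: m => mA mB.
  by exists (nth a0 s i), (nth a0 s i); split; rewrite ?inE ?eqxx ?connect0.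
- move=> i j ij; rewrite disjoints1 inE (nth_uniq _ (iS i) (iS j) (enum_uniq _)).
  exact: ij.
Qed.


Lemma glue e e' A B S u u' k (WA WB : 'I_k -> {set T}) :
  symmetric e' -> subrel e' e -> e u u' -> u != u' -> u \notin S -> u' \notin S ->
  sep e' A B S -> #|u' |: S| <= k ->
  linkage e' A (u |: S) WA -> linkage e' B (u' |: S) WB ->
  exists L : 'I_k -> {set T}, linkage e A B L.
Proof.
move=> se' sub euu' nuu' uS u'S sepS cardk [lA dA] [lB dB].
have [fA HA] := fchoice (fun i => trim1 (lA i)).
have [fB HB] := fchoice (fun i => trim1 (lB i)).
pose a i := (fA i).1.1; pose z i := (fA i).1.2; pose WA' i := (fA i).2.
pose b i := (fB i).1.1; pose z' i := (fB i).1.2; pose WB' i := (fB i).2.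
have PA : forall i, trimP e' A (u |: S) (a i, z i, WA' i) /\ WA' i \subset WA i.
  by move=> i; rewrite /a /z /WA'; case: (fA i) (HA i) => [[? ?] ?].
have PB : forall i, trimP e' B (u' |: S) (b i, z' i, WB' i) /\ WB' i \subset WB i.
  by move=> i; rewrite /b /z' /WB'; case: (fB i) (HB i) => [[? ?] ?].
clearbody a z WA' b z' WB'.
have zinj : injective z.
  move=> i j zij; apply/eqP; apply/negPn/negP => ij.
  have [[[_ _] [_ zi] _ _ _] si] := PA i; have [[[_ _] [_ zj] _ _ _] sj] := PA j.
  move/disjointP: (dA i j ij) => /(_ (z i)); apply; first exact: (subsetP si).
  by rewrite zij; exact: (subsetP sj).
have z'inj : injective z'.
  move=> i j zij; apply/eqP; apply/negPn/negP => ij.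
  have [[[_ _] [_ zi] _ _ _] si] := PB i; have [[[_ _] [_ zj] _ _ _] sj] := PB j.
  move/disjointP: (dB i j ij) => /(_ (z' i)); apply; first exact: (subsetP si).
  by rewrite zij; exact: (subsetP sj).
have surj : forall y, y \in u' |: S -> exists j, z' j = y.
  move=> y yX.
  have sb : z' @: setT \subset u' |: S.
    apply/subsetP => y0 /imsetP[j _ ->]; by have [[[_ ?] _ _ _ _] _] := PB j.
  have ck : #|z' @: setT| = k by rewrite card_imset // cardsT card_ord.
  have : z' @: setT == u' |: S by rewrite eqEcard sb ck cardk.
  move/eqP => E; move: yX; rewrite -E => /imsetP[j _ ->]; by exists j.
pose tau v := if v == u then u' else v.
have zX : forall i, z i \in u |: S by move=> i; have [[[_ ?] _ _ _ _] _] := PA i.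
have tauX : forall i, tau (z i) \in u' |: S.
  move=> i; rewrite /tau; case: eqP => [_|ne]; first by rewrite setU11.
  by move: (zX i); rewrite !inE => /orP[/eqP//|->]; rewrite orbT.
pose sg i := odflt i [pick j | z' j == tau (z i)].
have sgP : forall i, z' (sg i) = tau (z i).
  move=> i; rewrite /sg; case: pickP => [j /eqP //| none].
  have [j zj] := surj _ (tauX i); by have := none j; rewrite /= zj eqxx.
have tau_inj : forall i j, tau (z i) = tau (z j) -> i = j.
  move=> i j; rewrite /tau; case: eqP => zi; case: eqP => zj.
  - by move=> _; apply: zinj; rewrite zi zj.
  - move=> E; move: (zX j) u'S; rewrite !inE -E => /orP[/eqP zju|->] //.
    by case: zj; rewrite -E.
  - move=> E; move: (zX i) u'S; rewrite !inE E => /orP[/eqP ziu|->] //.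
    by case: zi; rewrite E.
  - by apply: zinj.
have sg_inj : forall i j, sg i = sg j -> i = j.
  by move=> i j E; apply: tau_inj; rewrite -!sgP E.
have mixed : forall i j v, v \in WA' i -> v \in WB' (sg j) -> i = j.
  move=> i j v vi vj.
  have [[[aA _] _ zu cA sA] _] := PA i.
  have [[[bB _] _ zu' cB sB] _] := PB (sg j).
  case: (boolP (v \in S)) => vS.
  - have vX : v \in u |: S by rewrite inE vS orbT.
    have vX' : v \in u' |: S by rewrite inE vS orbT.
    have vzi := zu v vi vX.
    have vzj := zu' v vj vX'.
    move: vzj; rewrite sgP /tau; case: eqP => [_ vu'|_ vzj].
      by move: u'S; rewrite -vu' vS.
    by apply: zinj; rewrite -vzi -vzj.
  - have [aS ca] := sA v S vi (subsetUr _ _) vS.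
    have [bS cb] := sB v S vj (subsetUr _ _) vS.
    have cs' := sym_connect_sym (avoid_sym S se').
    have := sepS (a i) (b (sg j)) aA bB aS.
    by rewrite (connect_trans ca) // cs'.
exists (fun i => WA' i :|: WB' (sg i)); split.
- move=> i.
  have [[[aA zXi] [aW zW] _ cA _] _] := PA i.
  have [[[bB z'X] [bW z'W] _ cB _] _] := PB (sg i).
  exists (a i), (b (sg i)); split; rewrite ?inE ?aA ?bB ?aW ?bW ?orbT //.
  have s1 : subrel (induced e' (WA' i)) (induced e (WA' i :|: WB' (sg i))).
    by move=> v w; rewrite /induced !inE => /and3P[/sub -> -> ->].
  have s2 : subrel (induced e' (WB' (sg i))) (induced e (WA' i :|: WB' (sg i))).
    by move=> v w; rewrite /induced !inE => /and3P[/sub -> -> ->]; rewrite !orbT.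
  apply: connect_trans (connect_mono s1 cA) _.
  apply: (@connect_trans _ _ (z' (sg i))).
    move: z'W; rewrite sgP /tau; case: eqP => [zu z'W|_ _]; last exact: connect0.
    apply: connect1; rewrite /induced !inE zW z'W; rewrite -zu in euu'; by rewrite euu' !orbT.
  move: cB; rewrite (sym_connect_sym (induced_sym (WB' (sg i)) se')) => cB.
  exact: connect_mono s2 cB.
- move=> i j ij; apply/disjointP => v; rewrite !inE => /orP[vi|vi] /orP[vj|vj].
  + have [_ si] := PA i; have [_ sj] := PA j.
    by move/disjointP: (dA i j ij) => /(_ v (subsetP si v vi) (subsetP sj v vj)).
  + by move: ij; rewrite (mixed i j v vi vj) eqxx.
  + by move: ij; rewrite (mixed j i v vj vi) eqxx.
  + have [_ si] := PB (sg i); have [_ sj] := PB (sg j).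
    have ne : sg i != sg j by apply: contra ij => /eqP/sg_inj ->.
    by move/disjointP: (dB _ _ ne) => /(_ v (subsetP si v vi) (subsetP sj v vj)).
Qed.


Lemma menger n e A B k : #|[set p : T * T | e p.1 p.2]| <= n -> symmetric e ->
  (forall X, sep e A B X -> k <= #|X|) -> exists L : 'I_k -> {set T}, linkage e A B L.
Proof.
elim: n e A B k => [|n IH] e A B k ne se H.
  apply: menger0 H => a b; apply/negP => eab.
  have : (a, b) \in [set p : T * T | e p.1 p.2] by rewrite inE.
  by move: ne; rewrite leqn0 cards_eq0 => /eqP ->; rewrite inE.
case: (pickP [pred p : T * T | e p.1 p.2]) => [[x y] /= exy | none]; last first.
  by apply: menger0 H => a b; have := none (a, b); move=> /= ->.
pose e' := fun a b => e a b && ~~ (((a == x) && (b == y)) || ((a == y) && (b == x))).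
have sub : subrel e' e by move=> a b /andP[].
have se' : symmetric e'.
  move=> a b; rewrite /e' se.
  by case: (a == x); case: (a == y); case: (b == x); case: (b == y).
have ne' : #|[set p : T * T | e' p.1 p.2]| <= n.
  have : [set p : T * T | e' p.1 p.2] \proper [set p : T * T | e p.1 p.2].
    apply/properP; split.
      by apply/subsetP => p; rewrite !inE; exact: sub.
    by exists (x, y); rewrite !inE //= /e' !eqxx /= andbF.
  by move/proper_card => lt; rewrite -ltnS; exact: leq_trans lt ne.
have [Hp | Hn] := classic (forall X, sep e' A B X -> k <= #|X|).
  have [L [lL dL]] := IH e' A B k ne' se' Hp.
  exists L; split => // i; have [a [b [aA bB aW bW c]]] := lL i.
  exists a, b; split => //; apply: connect_mono c => v w.
  by rewrite /induced => /and3P[/sub -> -> ->].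
have [S [sepS ltS]] : exists S, sep e' A B S /\ #|S| < k.
  apply: NNPP => nex; apply: Hn => X sX; rewrite leqNgt; apply/negP => lt.
  by apply: nex; exists X.
have [[a [b [aA bB aS cab]]] | nex] :=
  classic (exists a b, [/\ a \in A, b \in B, a \notin S & connect (avoid e S) a b]); last first.
  exfalso; have : sep e A B S.
    by move=> a b aA bB aS; apply/negP => c; apply: nex; exists a, b.
  by move/H; rewrite leqNgt ltS.
pose RA := [set v | [exists a0, [&& a0 \in A, a0 \notin S & connect (avoid e' S) a0 v]]].
pose RB := [set v | [exists b0, [&& b0 \in B, b0 \notin S & connect (avoid e' S) b0 v]]].
have RAS : forall v, v \in RA -> v \notin S.
  by move=> v; rewrite inE => /existsP[a0 /and3P[_ a0S c]]; exact: avoid_end c a0S.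
have RBS : forall v, v \in RB -> v \notin S.
  by move=> v; rewrite inE => /existsP[a0 /and3P[_ a0S c]]; exact: avoid_end c a0S.
have cs' := sym_connect_sym (avoid_sym S se').
have cs := sym_connect_sym (avoid_sym S se).
have RAB : forall v, v \in RA -> v \in RB -> False.
  move=> v; rewrite !inE => /existsP[a0 /and3P[a0A a0S ca]] /existsP[b0 /and3P[b0B b0S cb]].
  by have := sepS a0 b0 a0A b0B a0S; rewrite (connect_trans ca) // cs'.
have RAstep : forall v w, v \in RA -> avoid e' S v w -> w \in RA.
  move=> v w; rewrite !inE => /existsP[a0 /and3P[a0A a0S ca]] vw; apply/existsP.
  by exists a0; rewrite a0A a0S /=; exact: connect_trans ca (connect1 vw).
have RBstep : forall v w, v \in RB -> avoid e' S v w -> w \in RB.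
  move=> v w; rewrite !inE => /existsP[a0 /and3P[a0A a0S ca]] vw; apply/existsP.
  by exists a0; rewrite a0A a0S /=; exact: connect_trans ca (connect1 vw).
have aRA : a \in RA by rewrite inE; apply/existsP; exists a; rewrite aA aS connect0.
have bS : b \notin S := avoid_end cab aS.
have bRB : b \in RB by rewrite inE; apply/existsP; exists b; rewrite bB bS connect0.
have bRA : b \notin RA by apply/negP => bRA; exact: RAB bRA bRB.
have aRB : a \notin RB by apply/negP => aRB; exact: RAB aRA aRB.
have [u [w [uRA wRA uw]]] := connect_cross cab aRA bRA.
have cba : connect (avoid e S) b a by rewrite cs.
have [u' [w' [u'RB w'RB uw']]] := connect_cross cba bRB aRB.
have bad1 : ((u == x) && (w == y)) || ((u == y) && (w == x)).
  apply/negPn/negP => nb; apply: (negP wRA); apply: (RAstep u) => //.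
  by case/and3P: uw => euw uS wS; rewrite /avoid /e' euw nb uS wS.
have bad2 : ((u' == x) && (w' == y)) || ((u' == y) && (w' == x)).
  apply/negPn/negP => nb; apply: (negP w'RB); apply: (RBstep u') => //.
  by case/and3P: uw' => euw uS wS; rewrite /avoid /e' euw nb uS wS.
have nuu' : u != u' by apply/eqP => E; apply: (RAB u) => //; rewrite E.
have ux : (u == x) || (u == y) by case/orP: bad1 => /andP[-> _]; rewrite ?orbT.
have u'x : (u' == x) || (u' == y) by case/orP: bad2 => /andP[-> _]; rewrite ?orbT.
have uxy : forall v, (v == x) || (v == y) -> (v == u) || (v == u').
  move: ux u'x nuu' => /orP[] /eqP-> /orP[] /eqP->; rewrite ?eqxx // => _ v;
  by case/orP => ->; rewrite ?orbT.
have euu' : e u u'.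
  move: ux u'x nuu' => /orP[] /eqP-> /orP[] /eqP->; rewrite ?eqxx // => _.
  by rewrite se.
have Hbad : forall v w, e v w -> ~~ e' v w -> (v == u) || (v == u').
  move=> v w0 ev; rewrite /e' ev /= negbK => /orP[] /andP[vx _]; apply: uxy;
  by rewrite vx ?orbT.
have uS := RAS u uRA.
have u'S := RBS u' u'RB.
have cardA : #|u |: S| <= k by rewrite cardsU1 uS.
have cardB : #|u' |: S| <= k by rewrite cardsU1 u'S.
have HA : forall X, sep e' A (u |: S) X -> k <= #|X|.
  move=> X sX; apply: H; apply: (claimA sub Hbad sepS u'S _ sX).
  move: u'RB; rewrite inE => /existsP[b0 /and3P[b0B b0S cb]]; exists b0 => //.
  by rewrite b0S /= cs'.
have HB : forall X, sep e' B (u' |: S) X -> k <= #|X|.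
  move=> X sX; apply: H; apply: sep_sym se _.
  have Hbad' : forall v w, e v w -> ~~ e' v w -> (v == u') || (v == u).
    by move=> v w0 ev ne0; rewrite orbC; exact: Hbad ev ne0.
  have ex : exists2 b0, b0 \in A & (b0 \notin S) && connect (avoid e' S) u b0.
    move: uRA; rewrite inE => /existsP[b0 /and3P[b0B b0S cb]]; exists b0 => //.
    by rewrite b0S /= cs'.
  exact: (@claimA e e' B A S u' u sub Hbad' (sep_sym se' sepS) uS ex X sX).
have [WA LA] := IH e' A (u |: S) k ne' se' HA.
have [WB LB] := IH e' B (u' |: S) k ne' se' HB.
exact: glue se' sub euu' nuu' uS u'S sepS cardB LA LB.
Qed.

End Menger.

Lemma bigmin_le_seq (I : eqType) (r : seq I) (P : pred I) (F : I -> nat) d j :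
  j \in r -> P j -> \big[minn/d]_(i <- r | P i) F i <= F j.
Proof.
elim: r => // x r IH; rewrite inE big_cons => /orP[/eqP<- Pj | jr Pj].
  by rewrite Pj geq_minl.
case: (P x); last exact: IH.
exact: leq_trans (geq_minr _ _) (IH jr Pj).
Qed.

Lemma bigmin_att (I : Type) (r : seq I) (P : pred I) (F : I -> nat) d :
  \big[minn/d]_(i <- r | P i) F i = d \/
  exists i, P i /\ \big[minn/d]_(i <- r | P i) F i = F i.
Proof.
apply: (big_ind (fun v => v = d \/ exists i, P i /\ v = F i)); first by left.
  move=> x y Hx Hy /=; case: (leqP x y) => xy.
    by [].
  by [].
by move=> i Pi; right; exists i.
Qed.

Section Border.
Variable T : finType.
Implicit Types (B : {set {set T}}) (X : {set T}).

Lemma hittingP B X : reflect (forall H, H \in B -> H :&: X != set0) (hitting B X).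
Proof. exact: forall_inP. Qed.

Lemma border_le B X : hitting B X -> border B <= #|X|.
Proof. by move=> h; apply: bigmin_le_seq => //; exact: mem_index_enum. Qed.

Lemma border_att B X : hitting B X -> exists Y, hitting B Y /\ #|Y| = border B.
Proof.
move=> hX; case: (bigmin_att (index_enum {set T}) (hitting B) (fun X => #|X|) #|T|).
  move=> E; exists X; split => //; apply/eqP; rewrite eqn_leq border_le // andbT.
  by rewrite /border E max_card.
by move=> [Y [hY E]]; exists Y; split => //; rewrite /border E.
Qed.

Lemma border_ge B n : (forall X, hitting B X -> n <= #|X|) -> n <= #|T| -> n <= border B.
Proof.
move=> H nT; rewrite /border; apply: (big_ind (fun v => n <= v)) => //.
  by move=> x y hx hy; rewrite leq_min hx hy.
Qed.

Lemma bsub0 B : border (bsub B set0) = 0.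
Proof.
apply/eqP; rewrite -leqn0 -(cards0 T); apply: border_le; apply/hittingP => H.
by rewrite inE setI0 eqxx andbF.
Qed.

Lemma bsub_hit B X : hitting (bsub B X) X.
Proof. by apply/hittingP => H; rewrite inE => /andP[]. Qed.

Lemma border_step B (P : seq T) (x0 : T) j : j < size P ->
  border (bsub B (vset (take j.+1 P))) <= (border (bsub B (vset (take j P)))).+1.
Proof.
move=> jP; have [X [hX cX]] := border_att (bsub_hit B (vset (take j P))).
set y := nth x0 P j.
have : hitting (bsub B (vset (take j.+1 P))) (y |: X).
  apply/hittingP => H; rewrite inE => /andP[HB]; rewrite (take_nth x0 jP).
  case/set0Pn => v; rewrite !inE mem_rcons inE => /andP[vH /orP[/eqP vy|vt]].
    by apply/set0Pn; exists v; rewrite !inE vH vy eqxx.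
  have : H \in bsub B (vset (take j P)).
    by rewrite inE HB; apply/set0Pn; exists v; rewrite !inE vH vt.
  move/hittingP: hX => hX /hX /set0Pn[w]; rewrite !inE => /andP[wH wX].
  by apply/set0Pn; exists w; rewrite !inE wH wX orbT.
move/border_le => le; apply: leq_trans le _; rewrite -cX cardsU1.
by case: (y \notin X).
Qed.

Lemma border_split B (P1 R : seq T) : hitting B (vset (P1 ++ R)) ->
  border B <= border (bsub B (vset P1)) + border (bsub B (vset R)).
Proof.
move=> hP.
have [X1 [h1 c1]] := border_att (bsub_hit B (vset P1)).
have [X2 [h2 c2]] := border_att (bsub_hit B (vset R)).
have : hitting B (X1 :|: X2).
  apply/hittingP => H HB; move/hittingP: hP => /(_ H HB) /set0Pn[v].
  rewrite !inE mem_cat => /andP[vH /orP[v1|v2]].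
    have : H \in bsub B (vset P1) by rewrite inE HB; apply/set0Pn; exists v; rewrite !inE vH v1.
    move/hittingP: h1 => h1 /h1 /set0Pn[w]; rewrite !inE => /andP[wH wX].
    by apply/set0Pn; exists w; rewrite !inE wH wX.
  have : H \in bsub B (vset R) by rewrite inE HB; apply/set0Pn; exists v; rewrite !inE vH v2.
  move/hittingP: h2 => h2 /h2 /set0Pn[w]; rewrite !inE => /andP[wH wX].
  by apply/set0Pn; exists w; rewrite !inE wH wX orbT.
move/border_le => le; apply: leq_trans le _; rewrite -c1 -c2 cardsU; exact: leq_subr.
Qed.

End Border.

Lemma ivt (f : nat -> nat) n t : f 0 = 0 -> (forall j, j < n -> f j.+1 <= (f j).+1) ->
  t <= f n -> exists j, j <= n /\ f j = t.
Proof.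
move=> f0; elim: n => [|n IH] H tn.
  by exists 0; split => //; move: tn; rewrite f0 leqn0 => /eqP->.
case: (leqP t (f n)) => tfn.
  have [j [jn fj]] := IH (fun j jn => H j (ltnW jn)) tfn.
  by exists j; split => //; exact: ltnW.
exists n.+1; split => //; apply/eqP; rewrite eqn_leq tn andbT.
exact: leq_trans (H n (ltnSn n)) tfn.
Qed.

Section Paths.
Variable T : finType.
Implicit Types (A B : {set T}).

Lemma trim_seq (R : rel T) A B : [disjoint A & B] ->
  forall r a m, a \in A -> all (fun v => v \notin A :|: B) m ->
  path R a (m ++ r) -> last a (m ++ r) \in B ->
  exists a' m' b', [/\ a' \in A, b' \in B, path R a' (rcons m' b') &
                      all (fun v => v \notin A :|: B) m'].
Proof.
move=> dAB; elim=> [|c r IH] a m aA mall pth lst.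
  rewrite cats0 in lst; move: lst mall; case/lastP: m {pth} => [|m0 z] /=.
    by move=> aB _; move/disjointP: dAB => /(_ a aA aB).
  by rewrite last_rcons all_rcons inE => -> /andP[]; rewrite orbT.
move: pth lst; rewrite -cat_rcons cat_path last_cat last_rcons => /andP[p1 p2] lst.
case: (boolP (c \in A)) => cA.
  by apply: (IH c [::]) => //.
case: (boolP (c \in B)) => cB.
  by exists a, m, c.
apply: (IH a (rcons m c)) => //.
- by rewrite all_rcons inE negb_or cA cB.
- by rewrite cat_path p1 last_rcons.
- by rewrite last_cat last_rcons.
Qed.

Lemma path_notin (R : rel T) x c p : path R x p -> c \notin p ->
  path (fun a b => R a b && (b != c)) x p.
Proof.
elim: p x => //= y p IH x /andP[rxy pp]; rewrite inE negb_or => /andP[yc cp].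
by rewrite rxy eq_sym yc IH.
Qed.

Lemma drop_start (R : rel T) c z : connect R c z ->
  connect (fun a b => R a b && (b != c)) c z.
Proof.
move/connectP=> [p pp ->]; case: (shortenP pp) => p' pp' up' _.
apply/connectP; exists p' => //; apply: path_notin => //.
by case/andP: up'.
Qed.

Lemma path_induced (e : rel T) W x p : path (induced e W) x p -> {subset p <= W}.
Proof.
elim: p x => //= y p IH x /andP[/and3P[_ _ yW] pp] v; rewrite inE => /orP[/eqP->//|].
exact: IH pp v.
Qed.

Lemma final_trim (e : rel T) A B W : [disjoint A & B] -> linked e A B W ->
  exists a m b, [/\ a \in A, b \in B, gpath e (a :: rcons m b),
     [disjoint vset m & A :|: B] & vset (a :: rcons m b) \subset W].
Proof.
move=> dAB [a0 [b0 [a0A b0B a0W b0W c]]].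
case/connectP: c => p pp lst.
have lst' : last a0 ([::] ++ p) \in B by rewrite -lst.
have [a [m [b [aA bB pt mall]]]] := trim_seq (R:=induced e W) dAB (r:=p) (a:=a0) (m:=[::]) a0A isT pp lst'.
have lb : last a (rcons m b) = b by rewrite last_rcons.
move: lb; case: (shortenP pt) => p' pp' up' sub' lp'.
have ab : a != b by apply/eqP => ab; move/disjointP: dAB => /(_ a aA); rewrite ab => /(_ bB).
move: pp' up' sub' lp'; case/lastP: p' => [|m' y] /=.
  by move=> _ _ _ ba; move: ab; rewrite ba eqxx.
rewrite last_rcons => pp' up' sub' yb; subst y.
have aW : a \in W.
  by case: m' pp' up' sub' => [|v m0] /= /andP[/and3P[_ -> _]].
exists a, m', b; split => //.
- rewrite /gpath.
  by rewrite up' andbT; apply: sub_path pp' => v w /and3P[].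
- move: up' => /= /andP[_]; rewrite rcons_uniq => /andP[bm' _].
  rewrite disjoints_subset; apply/subsetP => v; rewrite !inE => vm'.
  have : v \in rcons m b by apply: sub'; rewrite mem_rcons inE vm' orbT.
  rewrite mem_rcons inE => /orP[/eqP vb|vm]; first by move: bm'; rewrite -vb vm'.
  by move/allP: mall => /(_ v vm); rewrite inE.
- apply/subsetP => v; rewrite inE inE => /orP[/eqP->//|vp].
  exact: path_induced pp' v vp.
Qed.

End Paths.

Section HitPath.
Variable T : finType.
Variable e : rel T.
Variable B : {set {set T}}.
Hypothesis bB : bramble e B.

Lemma touch_connect H1 H2 z u : H1 \in B -> H2 \in B -> z \in H1 -> u \in H2 ->
  connect (induced e (H1 :|: H2)) z u.
Proof.
case: bB => bc bt H1B H2B zH uH.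
have [_ c1] := bc H1 H1B; have [_ c2] := bc H2 H2B.
have s1 : subrel (fun a b => [&& e a b, a \in H1 & b \in H1]) (induced e (H1 :|: H2)).
  by move=> a b /and3P[eab aH bH]; rewrite /induced !inE eab aH bH.
have s2 : subrel (fun a b => [&& e a b, a \in H2 & b \in H2]) (induced e (H1 :|: H2)).
  by move=> a b /and3P[eab aH bH]; rewrite /induced !inE eab aH bH !orbT.
case: (bt H1 H2 H1B H2B) => [/set0Pn[v] | [x [y [xH yH exy]]]].
  rewrite inE => /andP[v1 v2].
  exact: connect_trans (connect_mono s1 (c1 z v zH v1)) (connect_mono s2 (c2 v u v2 uH)).
apply: connect_trans (connect_mono s1 (c1 z x zH xH)) _.
apply: connect_trans (connect_mono s2 (c2 y u yH uH)).
by apply: connect1; rewrite /induced !inE exy xH yH orbT.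
Qed.

Lemma notin_of (H V : {set T}) b : H :&: V == set0 -> b \in H -> b \notin V.
Proof.
move/eqP => E bH; apply/negP => bV; have : b \in H :&: V by rewrite inE bH bV.
by rewrite E inE.
Qed.

Definition hinv x r := forall H, H \in B -> H :&: vset (x :: r) == set0 ->
  exists2 u, u \in H & connect (fun a b => e a b && (b \notin vset (x :: r))) (last x r) u.

Lemma hp_step x r : gpath e (x :: r) -> hinv x r -> ~~ hitting B (vset (x :: r)) ->
  exists c, gpath e (x :: rcons r c) /\ hinv x (rcons r c).
Proof.
move=> gP I /forall_inPn [H HB nH]; rewrite negbK in nH.
have [u uH cu] := I H HB nH.
have uP : u \notin vset (x :: r) := notin_of nH uH.
case/connectP: cu => p pp ul.
case: p pp ul => [|c p] /= => [_ ul | /andP[/andP[elc cP] pp] ul].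
  by move: uP; rewrite ul inE mem_last.
exists c; split.
  move: gP; rewrite /gpath /= rcons_path elc andbT rcons_uniq mem_rcons inE negb_or.
  move: cP; rewrite !inE negb_or => /andP[cx cr] /and3P[-> xr ->]; rewrite cr xr eq_sym cx. done.
move=> H' H'B nH'.
pose V := vset (x :: r).
have VV : forall b, b \notin vset (x :: rcons r c) -> b \notin V.
  by move=> b; rewrite !inE mem_rcons !inE; apply: contra => /orP[->|->]; rewrite ?orbT.
have H'V : forall b, b \in H' -> b \notin V.
  by move=> b bH; apply: VV; exact: notin_of nH' bH.
have [nz _] := (bB.1 H' H'B); case/set0Pn: nz => u' u'H.
have c1 : connect (fun a b => e a b && (b \notin V)) c u.
  by apply/connectP; exists p.
have c2 : connect (fun a b => e a b && (b \notin V)) u u'.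
  apply: connect_mono (touch_connect HB H'B uH u'H) => a b /and3P[eab _].
  rewrite eab inE => /orP[bH|bH]; first exact: notin_of nH bH.
  exact: H'V.
have c3 := drop_start (connect_trans c1 c2).
exists u' => //; rewrite last_rcons.
apply: connect_mono c3 => a b /andP[/andP[eab bV] bc]; rewrite eab /=.
move: bV; rewrite !inE mem_rcons !inE => /norP[bx br]; by rewrite (negbTE bx) (negbTE bc) (negbTE br).
Qed.

Lemma hp_iter n x r : gpath e (x :: r) -> hinv x r -> #|T| < n + size (x :: r) ->
  exists P, gpath e P /\ hitting B (vset P).
Proof.
elim: n x r => [|n IH] x r gP I lt.
  exfalso; move: gP => /andP[_ /card_uniqP E].
  by move: lt; rewrite add0n -E ltnNge max_card.
case: (boolP (hitting B (vset (x :: r)))) => h; first by exists (x :: r).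
have [c [gP' I']] := hp_step gP I h.
apply: IH gP' I' _; by rewrite /= size_rcons -addSnnS.
Qed.

Lemma hitting_path : B != set0 -> exists P, gpath e P /\ hitting B (vset P).
Proof.
case/set0Pn => H0 H0B; have [nz _] := bB.1 H0 H0B; case/set0Pn: nz => v vH0.
apply: (@hp_iter #|T|.+1 v [::]) => //; last by rewrite /= addn1 ltnS.
move=> H HB nH; have [nz _] := bB.1 H HB; case/set0Pn: nz => u' u'H.
exists u' => //=.
have c := drop_start (touch_connect H0B HB vH0 u'H).
apply: connect_mono c => a b /andP[/and3P[eab _ _] bv].
by rewrite eab !inE bv.
Qed.

End HitPath.

Lemma gpath_take (T : finType) (e : rel T) p n : gpath e p -> 0 < n -> gpath e (take n p).
Proof.
case: p => // x r; case: n => // n /andP[pp up] _.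
have u : uniq (take n.+1 (x :: r)) := take_uniq _ up.
rewrite /gpath /=; move: u => /= ->; rewrite andbT.
by move: pp; rewrite -{1}(cat_take_drop n r) cat_path => /andP[].
Qed.

Lemma gpath_drop (T : finType) (e : rel T) p n : gpath e p -> n < size p -> gpath e (drop n p).
Proof.
elim: n p => [|n IH] p; first by rewrite drop0.
case: p => // x [|y r] //= gp lt; apply: IH => //.
by move: gp; rewrite /gpath /= => /andP[/andP[_ ->]] /andP[_ ->].
Qed.

Theorem lemma2p5 (T : finType) (e : rel T) (B : {set {set T}}) (t : nat) :
  simple_graph e -> bramble e B -> 0 < t -> 2 * t + 1 <= border B ->
  exists (P1 P2 : seq T) (Q : 'I_t -> seq T),
    [/\ gpath e P1, gpath e P2, [disjoint vset P1 & vset P2],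
        border (bsub B (vset P1)) = t & border (bsub B (vset P2)) = t] /\
    [/\ (forall i, gpath e (Q i)),
        (forall i j, i != j -> [disjoint vset (Q i) & vset (Q j)]) &
        (forall i, exists a m b,
            [/\ Q i = a :: rcons m b, a \in vset P1, b \in vset P2 &
                [disjoint vset m & vset P1 :|: vset P2]])].
Proof.
move=> [se ie] bB t0 bord.
have Bn0 : B != set0.
  apply/negP => /eqP B0.
  have : border B <= #|(set0 : {set T})|.
    by apply: border_le; apply/hittingP => H; rewrite B0 inE.
  by rewrite cards0 leqn0 => /eqP b0; move: bord; rewrite b0 addn1.
have [P [gP hP]] := hitting_path bB Bn0.
case: P gP hP => [//|x0 r0] gP hP; set P := x0 :: r0 in gP hP.
have vset0 : vset (T:=T) [::] = set0 by apply/setP => y; rewrite !inE.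
pose f j := border (bsub B (vset (take j P))).
have f0 : f 0 = 0 by rewrite /f take0 vset0 bsub0.
have fstep : forall j, j < size P -> f j.+1 <= (f j).+1.
  move=> j jP; rewrite /f. have := @border_step T B P x0 j jP. exact.
have bsubP : bsub B (vset P) = B.
  apply/setP => H; rewrite inE; case HB: (H \in B) => //=.
  by move/hittingP: hP => /(_ H HB).
have fn : t <= f (size P).
  rewrite /f take_size bsubP; apply: leq_trans bord.
  by rewrite mul2n -addnn -addnA leq_addr.
have [j1 [j1P fj1]] := ivt f0 fstep fn.
pose P1 := take j1 P; pose R := drop j1 P.
have j1pos : 0 < j1.
  by rewrite lt0n; apply/eqP => j0; move: fj1; rewrite j0 f0 => t00; move: t0; rewrite -t00.
have hs : hitting B (vset (P1 ++ R)) by rewrite cat_take_drop.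
have bs := border_split hs.
have fP1 : border (bsub B (vset P1)) = t := fj1.
rewrite fP1 in bs.
pose g j := border (bsub B (vset (take j R))).
have g0 : g 0 = 0 by rewrite /g take0 vset0 bsub0.
have gstep : forall j, j < size R -> g j.+1 <= (g j).+1.
  move=> j jP; rewrite /g. have := @border_step T B R x0 j jP. exact.
have gn : t <= g (size R).
  rewrite /g take_size; rewrite -(leq_add2l t); apply: leq_trans bs.
  apply: leq_trans bord; by rewrite mul2n -addnn leq_addr.
have [j2 [j2R gj2]] := ivt g0 gstep gn.
have j2pos : 0 < j2.
  by rewrite lt0n; apply/eqP => j0; move: gj2; rewrite j0 g0 => t00; move: t0; rewrite -t00.
pose P2 := take j2 R.
have fP2 : border (bsub B (vset P2)) = t := gj2.
have Rn : 0 < size R by apply: leq_trans j2pos j2R.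
have j1lt : j1 < size P by move: Rn; rewrite /R size_drop subn_gt0.
have gP1 : gpath e P1 by apply: gpath_take.
have gR : gpath e R by apply: gpath_drop.
have gP2 : gpath e P2 by apply: gpath_take.
have dP : [disjoint vset P1 & vset P2].
  apply/disjointP => v; rewrite !inE => v1 v2.
  move: gP => /andP[_]; rewrite -(cat_take_drop j1 P) cat_uniq => /and3P[_ /hasPn H _].
  by move: (H v (mem_take v2)); rewrite v1.
have sepH : forall X, sep e (vset P1) (vset P2) X -> t <= #|X|.
  move=> X sX; rewrite leqNgt; apply/negP => lt.
  have nh1 : ~~ hitting (bsub B (vset P1)) X.
    by apply/negP => h; move: (border_le h); rewrite fP1 leqNgt lt.
  have nh2 : ~~ hitting (bsub B (vset P2)) X.
    by apply/negP => h; move: (border_le h); rewrite fP2 leqNgt lt.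
  case/forall_inPn: nh1 => H1; rewrite inE => /andP[H1B /set0Pn[a]].
  rewrite inE negbK => /andP[aH aP] H1X.
  case/forall_inPn: nh2 => H2; rewrite inE => /andP[H2B /set0Pn[b]].
  rewrite inE negbK => /andP[bH bP] H2X.
  have := sX a b aP bP (notin_of H1X aH); apply/negP/negPn.
  apply: connect_mono (touch_connect bB H1B H2B aH bH) => v w /and3P[evw vH wH].
  rewrite /avoid evw; move: vH wH; rewrite !inE => /orP[vH|vH] /orP[wH|wH];
  by rewrite ?(notin_of H1X vH) ?(notin_of H2X vH) ?(notin_of H1X wH) ?(notin_of H2X wH).
have [L [lL dL]] := @menger T _ e (vset P1) (vset P2) t (leqnn _) se sepH.
have HQ : forall i, exists q : seq T, [/\ gpath e q, vset q \subset L i &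
   exists a m b, [/\ q = a :: rcons m b, a \in vset P1, b \in vset P2 &
                [disjoint vset m & vset P1 :|: vset P2]]].
  move=> i; have [a [m [b [aA bB' gq dm sq]]]] := final_trim dP (lL i).
  by exists (a :: rcons m b); split => //; exists a, m, b.
have [Q HQ'] := fchoice HQ.
exists P1, P2, Q; split; split => //.
- by move=> i; have [] := HQ' i.
- move=> i j ij; have [_ si _] := HQ' i; have [_ sj _] := HQ' j.
  apply/disjointP => v vi vj.
  by move/disjointP: (dL i j ij) => /(_ v (subsetP si v vi) (subsetP sj v vj)).
- by move=> i; have [] := HQ' i.
Qed.
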